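(* Let $\mathbf{x}:[-1,1]^2\to\mathbb{R}^2$, $\mathbf{x}(\xi,\eta)=(x(\xi,\eta),y(\xi,\eta))$, be a $C^1$ map whose Jacobian matrix $\mathbf{J}(\xi,\eta)=\begin{bmatrix} x_\xi & x_\eta\\ y_\xi & y_\eta\end{bmatrix}$ is nonsingular on the edge $\{\xi=1\}$ (including the corners $(1,\pm1)$). Let $F(-1,\cdot)$, $F(\cdot,-1)$, $F(\cdot,1)$ be given differentiable functions on $[-1,1]$ (the transformed Dirichlet data on the edges $\xi=-1$, $\eta=-1$, $\eta=1$), with $F(-1,-1)$ and $F(-1,1)$ taking the same value whether read from $F(-1,\cdot)$ or from $F(\cdot,\mp1)$, and let $u_{nBC}$ be a given function on the image of the edge $\xi=1$ (Neumann data). Define $S_{BC},T_{BC},\lambda_B,\lambda_C,F^a_\eta(1,\pm1)$, the polynomials $\varphi_0,\varphi_1,\psi_0,\psi_1$, and the operators $Pg$, $F^g_\xi(1,\eta)$, $PF^g$ as in the context. Assume the compatibility conditions: if $\lambda_B=0$ then $F_\xi(1,-1)=T_{BC}(-1)$, and if $\lambda_C=0$ then $F_\xi(1,1)=T_{BC}(1)$. Then for every sufficiently differentiable $g:[-1,1]^2\to\mathbb{R}$, the function $$V(\xi,\eta)=g(\xi,\eta)-Pg(\xi,\eta)+PF^g(\xi,\eta)$$ satisfies, for all $\xi,\eta\in[-1,1]$, $V(-1,\eta)=F(-1,\eta)$, $V(\xi,-1)=F(\xi,-1)$, $V(\xi,1)=F(\xi,1)$, and $$V_\xi(1,\eta)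+S_{BC}(\eta)V_\eta(1,\eta)=T_{BC}(\eta).$$
   Context: Setting: a curved quadrilateral $ABCD$ is the image of $[-1,1]^2$ under $\mathbf{x}$, with $A=\mathbf{x}(-1,-1)$, $B=\mathbf{x}(1,-1)$, $C=\mathbf{x}(1,1)$, $D=\mathbf{x}(-1,1)$; edge $AB$ is $\eta=-1$, $BC$ is $\xi=1$, $CD$ is $\eta=1$, $AD$ is $\xi=-1$. A field $u$ on the quadrilateral is represented as $V(\xi,\eta)=u(\mathbf{x}(\xi,\eta))$; Dirichlet data on $AB,CD,AD$ become $F(\xi,-1),F(\xi,1),F(-1,\eta)$, and the Neumann condition $\mathbf n\cdot\nabla u=u_{nBC}$ on $BC$ becomes $V_\xi(1,\eta)+S_{BC}(\eta)V_\eta(1,\eta)=T_{BC}(\eta)$. Notation: $F(1,-1):=F(\xi,-1)|_{\xi=1}$, $F(1,1):=F(\xi,1)|_{\xi=1}$, $F_\xi(1,-1):=\frac{d}{d\xi}F(\xi,-1)|_{\xi=1}$, $F_\xi(1,1):=\frac{d}{d\xi}F(\xi,1)|_{\xi=1}$. Definitions: $K_{xBC}(\eta)=\frac{\|\mathbf{x}_\eta(1,\eta)\|}{\det\mathbf{J}(1,\eta)}$, $K_{yBC}(\eta)=-\frac{\mathbf{x}_\xi(1,\eta)\cdot\mathbf{x}_\eta(1,\eta)}{\|\mathbf{x}_\eta(1,\eta)\|\det\mathbf{J}(1,\eta)}$, $S_{BC}(\eta)=K_{yBC}(\eta)/K_{xBC}(\eta)$, $T_{BC}(\eta)=u_{nBC}(\mathbf{x}(1,\eta))/K_{xBC}(\eta)$.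 Flags: $\lambda_B=0$ if $\mathbf{x}_\xi(1,-1)\cdot\mathbf{x}_\eta(1,-1)=0$ (edges $AB$ and $BC$ orthogonal at $B$) and $\lambda_B=1$ otherwise; $\lambda_C=0$ if $\mathbf{x}_\xi(1,1)\cdot\mathbf{x}_\eta(1,1)=0$ and $\lambda_C=1$ otherwise. When $\lambda_B=1$, $F^a_\eta(1,-1)=\frac{T_{BC}(-1)-F_\xi(1,-1)}{S_{BC}(-1)}$; when $\lambda_C=1$, $F^a_\eta(1,1)=\frac{T_{BC}(1)-F_\xi(1,1)}{S_{BC}(1)}$; any term multiplied by a flag equal to $0$ is taken to be $0$. Polynomials on $[-1,1]$: $\phi_0(t)=\tfrac12(1-t)$, $\phi_1(t)=\tfrac12(1+t)$; $\varphi_0=\phi_0^2(1+2\phi_1)$, $\varphi_1=\phi_1^2(1+2\phi_0)$, $\psi_0=2\phi_0^2\phi_1$, $\psi_1=-2\phi_0\phi_1^2$. $Pg(\xi,\eta)=g(-1,\eta)\varphi_0(\xi)+g_\xi(1,\eta)\psi_1(\xi)+g(\xi,-1)\varphi_0(\eta)+g(\xi,1)\varphi_1(\eta)-[g(-1,-1)\varphi_0(\eta)+g(-1,1)\varphi_1(\eta)]\varphi_0(\xi)-[g_\xi(1,-1)\varphi_0(\eta)+g_\xi(1,1)\varphi_1(\eta)]\psi_1(\xi)+[\lambda_Bg_\eta(1,-1)\psi_0(\eta)+\lambda_Cg_\eta(1,1)\psi_1(\eta)]\varphi_1(\xi)$. $F^g_\xi(1,\eta)=T_{BC}(\eta)-S_{BC}(\eta)\{g_\eta(1,\eta)-[g(1,-1)-F(1,-1)]\varphi_0'(\eta)-[g(1,1)-F(1,1)]\varphi_1'(\eta)-\lambda_B[g_\eta(1,-1)-F^a_\eta(1,-1)]\psi_0'(\eta)-\lambda_C[g_\eta(1,1)-F^a_\eta(1,1)]\psi_1'(\eta)\}$.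 $PF^g(\xi,\eta)=F(-1,\eta)\varphi_0(\xi)+F^g_\xi(1,\eta)\psi_1(\xi)+F(\xi,-1)\varphi_0(\eta)+F(\xi,1)\varphi_1(\eta)-[F(-1,-1)\varphi_0(\eta)+F(-1,1)\varphi_1(\eta)]\varphi_0(\xi)-[F_\xi(1,-1)\varphi_0(\eta)+F_\xi(1,1)\varphi_1(\eta)]\psi_1(\xi)+[\lambda_BF^a_\eta(1,-1)\psi_0(\eta)+\lambda_CF^a_\eta(1,1)\psi_1(\eta)]\varphi_1(\xi)$. *)

(* Defs.v *)
From Stdlib Require Import Reals Lra.
From Coquelicot Require Import Coquelicot.
Open Scope R_scope.

Definition I11 (t : R) : Prop := -1 <= t <= 1.
Definition Sq (p : R * R) : Prop := I11 (fst p) /\ I11 (snd p).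

Definition dxi (f : R -> R -> R) (a b : R) : R := Derive (fun s => f s b) a.
Definition deta (f : R -> R -> R) (a b : R) : R := Derive (fun t => f a t) b.

Definition C1_on_square (f : R -> R -> R) : Prop :=
  forall a b, I11 a -> I11 b ->
    ex_derive (fun s => f s b) a /\ ex_derive (fun t => f a t) b /\
    filterlim (fun p : R * R => dxi f (fst p) (snd p)) (within Sq (locally (a, b)))
              (locally (dxi f a b)) /\
    filterlim (fun p : R * R => deta f (fst p) (snd p)) (within Sq (locally (a, b)))
              (locally (deta f a b)).

Definition phi0 (t : R) : R := (1 - t) / 2.
Definition phi1 (t : R) : R := (1 + t) / 2.
Definition vphi0 (t : R) : R := phi0 t ^ 2 * (1 + 2 * phi1 t).
Definition vphi1 (t : R) : R := phi1 t ^ 2 * (1 + 2 * phi0 t).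
Definition psi0 (t : R) : R := 2 * phi0 t ^ 2 * phi1 t.
Definition psi1 (t : R) : R := - 2 * phi0 t * phi1 t ^ 2.

Section Geometry.
Variables xx yy : R -> R -> R.

Definition detJ (a b : R) : R := dxi xx a b * deta yy a b - deta xx a b * dxi yy a b.
Definition norm_xeta (a b : R) : R := sqrt (deta xx a b ^ 2 + deta yy a b ^ 2).
Definition dot_xxi_xeta (a b : R) : R := dxi xx a b * deta xx a b + dxi yy a b * deta yy a b.

Definition KxBC (eta : R) : R := norm_xeta 1 eta / detJ 1 eta.
Definition KyBC (eta : R) : R := - dot_xxi_xeta 1 eta / (norm_xeta 1 eta * detJ 1 eta).
Definition SBC (eta : R) : R := KyBC eta / KxBC eta.
Definition TBC (unBC : R * R -> R) (eta : R) : R := unBC (xx 1 eta, yy 1 eta) / KxBC eta.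

(* flags: 0 iff the edges meet orthogonally at the corner *)
Definition lamB : R := if Req_dec_T (dot_xxi_xeta 1 (-1)) 0 then 0 else 1.
Definition lamC : R := if Req_dec_T (dot_xxi_xeta 1 1) 0 then 0 else 1.
End Geometry.

Section Transfinite.
Variables (xx yy : R -> R -> R) (unBC : R * R -> R).
(* Dirichlet data: FL = F(-1,.), FB = F(.,-1), FT = F(.,1) *)
Variables (FL FB FT : R -> R).

Let S := SBC xx yy.
Let T := TBC xx yy unBC.
Let lB := lamB xx yy.
Let lC := lamC xx yy.

Definition FaB : R := (T (-1) - Derive FB 1) / S (-1).
Definition FaC : R := (T 1 - Derive FT 1) / S 1.

Definition Pg (g : R -> R -> R) (xi eta : R) : R :=
  g (-1) eta * vphi0 xi + dxi g 1 eta * psi1 xi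
  + g xi (-1) * vphi0 eta + g xi 1 * vphi1 eta
  - (g (-1) (-1) * vphi0 eta + g (-1) 1 * vphi1 eta) * vphi0 xi
  - (dxi g 1 (-1) * vphi0 eta + dxi g 1 1 * vphi1 eta) * psi1 xi
  + (lB * deta g 1 (-1) * psi0 eta + lC * deta g 1 1 * psi1 eta) * vphi1 xi.

Definition Fgxi (g : R -> R -> R) (eta : R) : R :=
  T eta - S eta *
    (deta g 1 eta
     - (g 1 (-1) - FB 1) * Derive vphi0 eta
     - (g 1 1 - FT 1) * Derive vphi1 eta
     - lB * (deta g 1 (-1) - FaB) * Derive psi0 eta
     - lC * (deta g 1 1 - FaC) * Derive psi1 eta).

Definition PFg (g : R -> R -> R) (xi eta : R) : R :=
  FL eta * vphi0 xi + Fgxi g eta * psi1 xi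
  + FB xi * vphi0 eta + FT xi * vphi1 eta
  - (FL (-1) * vphi0 eta + FL 1 * vphi1 eta) * vphi0 xi
  - (Derive FB 1 * vphi0 eta + Derive FT 1 * vphi1 eta) * psi1 xi
  + (lB * FaB * psi0 eta + lC * FaC * psi1 eta) * vphi1 xi.

Definition Vsol (g : R -> R -> R) (xi eta : R) : R := g xi eta - Pg g xi eta + PFg g xi eta.
End Transfinite.

(* Main.v *)
Require Import Defs.
From Stdlib Require Import Reals Lra.
From Coquelicot Require Import Coquelicot.
Open Scope R_scope.

Lemma poly_vals :
  vphi0 (-1) = 1 /\ vphi0 1 = 0 /\ vphi1 (-1) = 0 /\ vphi1 1 = 1 /\
  psi0 (-1) = 0 /\ psi0 1 = 0 /\ psi1 (-1) = 0 /\ psi1 1 = 0.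
Proof. unfold vphi0, vphi1, psi0, psi1, phi0, phi1; repeat split; field. Qed.

Lemma dvals :
  Derive vphi0 (-1) = 0 /\ Derive vphi0 1 = 0 /\ Derive vphi1 (-1) = 0 /\ Derive vphi1 1 = 0 /\
  Derive psi0 (-1) = 1 /\ Derive psi0 1 = 0 /\ Derive psi1 (-1) = 0 /\ Derive psi1 1 = 1.
Proof.
  unfold vphi0, vphi1, psi0, psi1, phi0, phi1;
  repeat split; apply is_derive_unique; auto_derive; auto; field.
Qed.

Lemma S_nz xx yy e : detJ xx yy 1 e <> 0 -> dot_xxi_xeta xx yy 1 e <> 0 -> SBC xx yy e <> 0.
Proof.
  intros Hd Hdot.
  assert (Hn : norm_xeta xx yy 1 e <> 0).
  { unfold norm_xeta. intro H. apply sqrt_eq_0 in H.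
    2: nra.
    apply Hd. unfold detJ.
    assert (deta xx 1 e = 0) by nra. assert (deta yy 1 e = 0) by nra.
    rewrite H0, H1. ring. }
  unfold SBC, KyBC, KxBC. intro H.
  field_simplify in H; auto.
  unfold Rdiv in H. apply Rmult_integral in H. destruct H as [H|H].
  - apply Hdot. lra.
  - apply Rinv_neq_0_compat in H; auto. apply Rmult_integral_contrapositive; split; auto.
Qed.

Lemma S_z xx yy e : dot_xxi_xeta xx yy 1 e = 0 -> SBC xx yy e = 0.
Proof. intros H. unfold SBC, KyBC. rewrite H. unfold Rdiv. ring. Qed.

Lemma Dpoly t :
  Derive vphi0 t = (3 * t * t - 3) / 4 /\ Derive vphi1 t = (3 - 3 * t * t) / 4 /\
  Derive psi0 t = (3 * t * t - 2 * t - 1) / 4 /\ Derive psi1 t = (3 * t * t + 2 * t - 1) / 4.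
Proof.
  unfold vphi0, vphi1, psi0, psi1, phi0, phi1;
  repeat split; apply is_derive_unique; auto_derive; auto; field.
Qed.
Lemma Fgxi_m1 xx yy unBC FB FT g :
  detJ xx yy 1 (-1) <> 0 ->
  (lamB xx yy = 0 -> Derive FB 1 = TBC xx yy unBC (-1)) ->
  Fgxi xx yy unBC FB FT g (-1) = Derive FB 1.
Proof.
  intros Hd Hc. destruct dvals as (d1&d2&d3&d4&d5&d6&d7&d8).
  unfold Fgxi. rewrite d1, d3, d5, d7.
  unfold FaB in *. unfold lamB in *.
  destruct (Req_dec_T (dot_xxi_xeta xx yy 1 (-1)) 0) as [E|E].
  - rewrite (S_z _ _ _ E). rewrite Hc; auto. ring.
  - pose proof (S_nz _ _ _ Hd E). field. auto.
Qed.

Lemma Fgxi_p1 xx yy unBC FB FT g :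
  detJ xx yy 1 1 <> 0 ->
  (lamC xx yy = 0 -> Derive FT 1 = TBC xx yy unBC 1) ->
  Fgxi xx yy unBC FB FT g 1 = Derive FT 1.
Proof.
  intros Hd Hc. destruct dvals as (d1&d2&d3&d4&d5&d6&d7&d8).
  unfold Fgxi. rewrite d2, d4, d6, d8.
  unfold FaC in *. unfold lamC in *.
  destruct (Req_dec_T (dot_xxi_xeta xx yy 1 1) 0) as [E|E].
  - rewrite (S_z _ _ _ E). rewrite Hc; auto. ring.
  - pose proof (S_nz _ _ _ Hd E). field. auto.
Qed.

Theorem mainTheorem1
  (xx yy : R -> R -> R) (FL FB FT : R -> R) (unBC : R * R -> R)
  (Hx : C1_on_square xx) (Hy : C1_on_square yy)
  (Hdet : forall eta, I11 eta -> detJ xx yy 1 eta <> 0)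
  (HF : forall t, I11 t -> ex_derive FL t /\ ex_derive FB t /\ ex_derive FT t)
  (HcornA : FL (-1) = FB (-1)) (HcornD : FL 1 = FT (-1))
  (HcompB : lamB xx yy = 0 -> Derive FB 1 = TBC xx yy unBC (-1))
  (HcompC : lamC xx yy = 0 -> Derive FT 1 = TBC xx yy unBC 1)
  (g : R -> R -> R) (Hg : C1_on_square g) :
  forall xi eta, I11 xi -> I11 eta ->
    let V := Vsol xx yy unBC FL FB FT g in
    V (-1) eta = FL eta /\ V xi (-1) = FB xi /\ V xi 1 = FT xi /\
    ex_derive (fun s => V s eta) 1 /\ ex_derive (fun t => V 1 t) eta /\
    Derive (fun s => V s eta) 1 + SBC xx yy eta * Derive (fun t => V 1 t) eta
      = TBC xx yy unBC eta.
Proof.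
  intros xi eta Hxi Heta V.
  assert (I1 : I11 1) by (unfold I11; lra).
  assert (Im1 : I11 (-1)) by (unfold I11; lra).
  destruct poly_vals as (p1&p2&p3&p4&p5&p6&p7&p8).
  destruct (HF 1 I1) as (_&HFB1&HFT1).
  destruct (Hg 1 eta I1 Heta) as (Hgs&Hgt&_).
  destruct (Hg 1 (-1) I1 Im1) as (Hgsm&_).
  destruct (Hg 1 1 I1 I1) as (Hgsp&_).
  assert (DX : is_derive (fun s => V s eta) 1 (Fgxi xx yy unBC FB FT g eta)).
  { unfold V, Vsol, Pg, PFg, dxi.
    unfold vphi0, vphi1, psi0, psi1, phi0, phi1.
    auto_derive.
    - repeat split; auto.
    - replace (Derive (fun x => FB x) 1) with (Derive FB 1) by reflexivity.
      replace (Derive (fun x => FT x) 1) with (Derive FT 1) by reflexivity.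
      field. }
  set (Br := fun t => g 1 t - (g 1 (-1) - FB 1) * vphi0 t - (g 1 1 - FT 1) * vphi1 t
       - lamB xx yy * (deta g 1 (-1) - FaB xx yy unBC FB) * psi0 t
       - lamC xx yy * (deta g 1 1 - FaC xx yy unBC FT) * psi1 t).
  assert (EV : forall t, V 1 t = Br t).
  { intros t. unfold V, Vsol, Pg, PFg, Br. rewrite p2, p4, p8. ring. }
  assert (DY : is_derive (fun t => V 1 t) eta
     (deta g 1 eta
     - (g 1 (-1) - FB 1) * Derive vphi0 eta
     - (g 1 1 - FT 1) * Derive vphi1 eta
     - lamB xx yy * (deta g 1 (-1) - FaB xx yy unBC FB) * Derive psi0 eta
     - lamC xx yy * (deta g 1 1 - FaC xx yy unBC FT) * Derive psi1 eta)).
  { apply (is_derive_ext Br). { intros; rewrite EV; auto. }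
    unfold Br, deta.
    destruct (Dpoly eta) as (q1&q2&q3&q4); rewrite q1, q2, q3, q4.
    unfold vphi0, vphi1, psi0, psi1, phi0, phi1.
    auto_derive.
    - repeat split; auto.
    - field. }
  repeat split.
  - unfold V, Vsol, Pg, PFg. rewrite p1, p3, p7. rewrite HcornA, HcornD. ring.
  - unfold V, Vsol, Pg, PFg. rewrite p1, p3, p5, p7.
    rewrite (Fgxi_m1 _ _ _ _ _ _ (Hdet _ Im1) HcompB). ring.
  - unfold V, Vsol, Pg, PFg. rewrite p2, p4, p6, p8.
    rewrite (Fgxi_p1 _ _ _ _ _ _ (Hdet _ I1) HcompC). ring.
  - eexists; exact DX.
  - eexists; exact DY.
  - assert (E1 : Derive (fun s => V s eta) 1 = Fgxi xx yy unBC FB FT g eta)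
      by (apply is_derive_unique; exact DX).
    rewrite E1. erewrite is_derive_unique; [|exact DY].
    unfold Fgxi. ring.
Qed.
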